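(* Let $X$ be a compact metrizable space and let $\mathcal F=\{f_1,\dots,f_m\}$ and $\mathcal G=\{g_1,\dots,g_m\}$ be Markov maps on $X$ with respect to partitions $\mathcal A=\{A_1,\dots,A_m\}$ and $\mathcal B=\{B_1,\dots,B_m\}$ respectively. Suppose both are topologically expanding and that they are combinatorially conjugate. Then they are topologically conjugate: there is a homeomorphism $H:X\to X$ with $H\circ f_i(x)=g_i\circ H(x)$ for all $x\in A_i$ and all $i\in\{1,\dots,m\}$.
   Context: A partition of $X$ is a finite family $\mathcal A=\{A_1,\dots,A_m\}$ of closed connected subsets with $A_i\cap A_j$ finite for $i\ne j$ and $\bigcup A_i=X$; its break-points are $\mathrm{bk}(\mathcal A)=\{x: x\in A_i\cap A_j \text{ for some } i\ne j\}$. A Markov map with respect to $\mathcal A$ is a family $\mathcal F=\{f_i\}$ of homeomorphisms $f_i:A_i\to f_i(A_i)\subseteq X$ (not required to agree on overlaps) such that each $f_i(A_i)$ is a union of members of $\mathcal A$ and $f_i(A_i\cap\mathrm{bk}(\mathcal A))\subseteq\mathrm{bk}(\mathcal A)$. Level-$n$ pieces are defined inductively: $\mathcal A^0=\mathcal A$, and $\mathcal A^{n}$ consists of the sets $(f_i|_{A_i})^{-1}(B)$ with $B\in\mathcal A^{n-1}$, $B\subseteq f_i(A_i)$. $\mathcal F$ is topologically expanding if for every $x\in X$ the sets $\mathrm{Int}\big(\bigcup\{A\in\mathcal A^n: x\in A\}\big)$, $n\in\mathbb N$, form a neighborhood basis of $x$. $\mathcal F$ and $\mathcal G$ are combinatorially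 conjugate if there is a homeomorphism $H:X\to X$ with $H(A_i)=B_i$ for all $i$, $H\circ f_i(x)=g_i\circ H(x)$ for every break-point $x\in A_i\cap\mathrm{bk}(\mathcal A)$, and the same Markov matrix: $A_j\subseteq f_i(A_i)$ iff $B_j\subseteq g_i(B_i)$. *)

(* Defs.v *)
From HB Require Import structures.
From mathcomp Require Import all_boot all_order all_algebra.
From mathcomp Require Import all_classical all_reals all_analysis.
Set Implicit Arguments. Unset Strict Implicit. Unset Printing Implicit Defensive.
Import Order.TTheory GRing.Theory Num.Theory.
Local Open Scope classical_set_scope.

Section MarkovDefs.
Context {X : topologicalType} {m : nat}.

Definition is_partition (A : 'I_m -> set X) : Prop :=
  (forall i, closed (A i)) /\ (forall i, connected (A i)) /\
  (forall i j, i != j -> finite_set (A i `&` A j)) /\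
  \bigcup_(i in [set: 'I_m]) A i = [set: X].

Definition bk (A : 'I_m -> set X) : set X :=
  [set x | exists i j, i != j /\ A i x /\ A j x].

Definition homeo_onto (S : set X) (f : X -> X) : Prop :=
  {within S, continuous f} /\
  exists g : X -> X, {within f @` S, continuous g} /\ (forall x, S x -> g (f x) = x).

Definition is_markov (A : 'I_m -> set X) (f : 'I_m -> X -> X) : Prop :=
  (forall i, homeo_onto (A i) (f i)) /\
  (forall i, exists J : set 'I_m, f i @` A i = \bigcup_(j in J) A j) /\
  (forall i, f i @` (A i `&` bk A) `<=` bk A).

Fixpoint pieces (A : 'I_m -> set X) (f : 'I_m -> X -> X) (n : nat) : set (set X) :=
  match n with
  | 0 => [set P | exists i, P = A i]
  | n'.+1 => [set P | exists i, exists2 B, pieces A f n' B &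
                B `<=` f i @` A i /\ P = A i `&` (f i @^-1` B)]
  end.

Definition top_expanding (A : 'I_m -> set X) (f : 'I_m -> X -> X) : Prop :=
  forall x : X,
    let U n := interior (\bigcup_(P in [set P | pieces A f n P /\ P x]) P) in
    (forall n, nbhs x (U n)) /\
    (forall V, nbhs x V -> exists n, U n `<=` V).

Definition homeomorphism (H : X -> X) : Prop :=
  continuous H /\ exists K : X -> X, continuous K /\ cancel H K /\ cancel K H.

Definition comb_conjugate (A B : 'I_m -> set X) (f g : 'I_m -> X -> X) : Prop :=
  exists H : X -> X, homeomorphism H /\
    (forall i, H @` A i = B i) /\
    (forall i x, A i x -> bk A x -> H (f i x) = g i (H x)) /\
    (forall i j, (A j `<=` f i @` A i) <-> (B j `<=` g i @` B i)).

End MarkovDefs.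

(* Main.v *)
Require Import Defs.
From mathcomp Require Import all_boot all_order all_algebra.
From mathcomp Require Import all_classical all_reals all_analysis.
Import Order.TTheory GRing.Theory Num.Theory.
Local Open Scope classical_set_scope.

Section Sys.
Variables (R : realType) (X : pseudoMetricType R) (m : nat).
Variables (A : 'I_m -> set X) (f : 'I_m -> X -> X).
Hypothesis hX : hausdorff_space X.
Hypothesis cX : compact [set: X].
Hypothesis pA : is_partition A.
Hypothesis mA : is_markov A f.

Definition ginv (i : 'I_m) : X -> X := sval (cid ((proj1 mA) i).2).

Lemma ginvK {i x} : A i x -> ginv i (f i x) = x.
Proof. by rewrite /ginv; case: cid => g /= [_ H]; exact: H. Qed.

Lemma ginv_cont i : {within f i @` A i, continuous (ginv i)}.
Proof. by rewrite /ginv; case: cid => g /= [H _]. Qed.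

Lemma f_inj {i a b} : A i a -> A i b -> f i a = f i b -> a = b.
Proof. by move=> Aa Ab e; rewrite -(ginvK Aa) -(ginvK Ab) e. Qed.

Lemma preim_img i (S : set X) : S `<=` f i @` A i ->
  A i `&` f i @^-1` S = ginv i @` S.
Proof.
move=> hS; apply/seteqP; split.
  by move=> x [Ax Sfx]; exists (f i x) => //; exact: ginvK.
move=> y [z Sz <-]; have [a Aa faz] := hS z Sz; subst z.
by rewrite ginvK //.
Qed.

Fixpoint Pw (i : 'I_m) (w : seq 'I_m) : set X :=
  if w is j :: w' then A i `&` f i @^-1` Pw j w' else A i.

Fixpoint adm (i : 'I_m) (w : seq 'I_m) : Prop :=
  if w is j :: w' then (A j `<=` f i @` A i) /\ adm j w' else True.

Lemma Pw_sub i w : Pw i w `<=` A i.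
Proof. by case: w => [|j w] //= x []. Qed.

Lemma Pw_piece i w : adm i w -> pieces A f (size w) (Pw i w).
Proof.
elim: w i => [|j w IH] i /=; first by move=> _; exists i.
move=> [Hj ad]; exists i; exists (Pw j w); first exact: IH.
by split => //; exact: subset_trans (@Pw_sub j w) Hj.
Qed.

Lemma fimg_cover i y : (f i @` A i) y -> exists k, A k `<=` f i @` A i /\ A k y.
Proof.
have [J ->] := (proj1 (proj2 mA)) i.
by case=> k Jk Aky; exists k; split => // z Az; exists k.
Qed.

Lemma Pw_ext i w x : adm i w -> Pw i w x ->
  exists a, adm i (rcons w a) /\ Pw i (rcons w a) x.
Proof.
elim: w i x => [|j w IH] i x /=.
  move=> _ Ax; have [k [Hk Akx]] := @fimg_cover i (f i x) (ex_intro2 _ _ x Ax erefl).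
  by exists k.
move=> [Hj ad] [Ax Pfx]; have [a [ad' P']] := IH j (f i x) ad Pfx.
by exists a.
Qed.

Lemma Pw_cover n x : exists i w, size w = n /\ adm i w /\ Pw i w x.
Proof.
elim: n => [|n [i [w [sw [ad Px]]]]].
  have : [set: X] x by [].
  rewrite -(proj2 (proj2 (proj2 pA))) => -[i _ Ax].
  by exists i, [::].
have [a [ad' P']] := Pw_ext _ _ _ ad Px.
by exists i, (rcons w a); rewrite size_rcons sw.
Qed.

Lemma Pw_trunc i w a : Pw i (rcons w a) `<=` Pw i w.
Proof.
elim: w i => [|j w IH] i /= x [Ax Pfx] //; split => //; exact: IH.
Qed.

Lemma adm_trunc i w a : adm i (rcons w a) -> adm i w.
Proof. by elim: w i => [|j w IH] i //= [H1 H2]; split => //; exact: IH. Qed.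

Lemma Pw_conn i w : adm i w -> connected (Pw i w).
Proof.
elim: w i => [|j w IH] i /=; first by move=> _; exact: (proj1 (proj2 pA)) i.
move=> [Hj ad]; rewrite preim_img; last exact: subset_trans (@Pw_sub j w) Hj.
apply: connected_continuous_connected; first exact: IH.
apply: continuous_subspaceW (ginv_cont i).
exact: subset_trans (@Pw_sub j w) Hj.
Qed.

Lemma conn_open_fin (Q O F : set X) q y : connected Q -> open O ->
  finite_set F -> Q `&` O `<=` F -> Q q -> O q -> Q y -> ~ O y -> False.
Proof.
move=> cQ oO fF QOF Qq Oq Qy nOy.
have acc := hausdorff_accessible hX.
have clF : closed (F `\ q).
  by apply: (proj1 (@accessible_finite_set_closed X) acc); exact: finite_setD.
have e : [set q] = Q.
  apply: cQ; first by exists q.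
    exists (O `&` ~` (F `\ q)); first by apply: openI => //; exact: closed_openC.
    apply/seteqP; split => [z -> | z [Qz [Oz nF]]]; first by split => //; split => // -[_ /(_ erefl)].
    apply: contrapT => nzq; apply: nF; split; first exact: QOF.
    exact: nzq.
  exists [set q]; first exact: accessible_closed_set1.
  by apply/seteqP; split => [z -> | z [Qz ->]].
by move: Qy; rewrite -e => eyq; apply: nOy; rewrite eyq.
Qed.

Lemma fin_conn_single (Q : set X) : connected Q -> finite_set Q ->
  forall a b, Q a -> Q b -> a = b.
Proof.
move=> cQ fQ a b Qa Qb; apply: contrapT => nab.
apply: (@conn_open_fin Q (~` [set a]) Q b a cQ) => //.
- by apply: closed_openC; exact: accessible_closed_set1 (hausdorff_accessible hX) a.
- by move=> e; apply: nab; rewrite e.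
- by apply.
Qed.

Lemma pieces_class n P : pieces A f n P ->
  (exists i w, size w = n /\ adm i w /\ P = Pw i w) \/
  (forall a b, P a -> P b -> a = b).
Proof.
elim: n P => [|n IH] P /=.
  by case=> i ->; left; exists i, [::].
case=> i [B HB [BS ->]].
have inj : (forall a b, B a -> B b -> a = b) ->
    forall a b, (A i `&` f i @^-1` B) a -> (A i `&` f i @^-1` B) b -> a = b.
  move=> Bs a b [Aa Ba] [Ab Bb]; apply: (f_inj Aa Ab); exact: Bs.
case: (IH B HB) => [[j [w [sw [ad eB]]]] | Bsing]; last by right; exact: inj.
case: (pselect (A j `<=` f i @` A i)) => Hj.
  by left; exists i, (j :: w); rewrite /= sw eB.
right; apply: inj; rewrite eB; apply: fin_conn_single; first exact: Pw_conn.
have [J eJ] := (proj1 (proj2 mA)) i.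
apply: (@sub_finite_set _ _ (\bigcup_(k in J) (A j `&` A k))).
  move=> z Pz; have : (f i @` A i) z by apply: BS; rewrite eB.
  rewrite eJ => -[k Jk Akz]; exists k => //; split => //; exact: (@Pw_sub j w).
apply: bigcup_finite; first exact: finite_finset.
move=> k Jk; apply: (proj1 (proj2 (proj2 pA))); apply/eqP => ejk.
by apply: Hj; rewrite eJ ejk => z Az; exists k.
Qed.

Lemma pieces_closed n P : pieces A f n P -> closed P.
Proof.
elim: n P => [|n IH] P /=; first by case=> i ->; exact: (proj1 pA) i.
case=> i [B HB [BS ->]]; rewrite preim_img //.
apply: compact_closed hX _; apply: continuous_compact.
  exact: continuous_subspaceW BS (ginv_cont i).
apply: (subclosed_compact (IH _ HB) cX) => //.
Qed.

Lemma pieces_finite n : finite_set (pieces A f n).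
Proof.
elim: n => [|n IH] /=.
  apply: (@sub_finite_set _ _ (A @` [set: 'I_m])); last first.
    exact: finite_image finite_finset.
  by move=> P [i ->]; exists i.
apply: sub_finite_set (finite_image2 (fun i B => A i `&` f i @^-1` B)
  (@finite_finset _ [set: 'I_m]) IH).
by move=> P [i [B HB [_ ->]]]; exists i => //; exists B.
Qed.

Lemma pieces_finI n P P' : pieces A f n P -> pieces A f n P' -> P <> P' ->
  finite_set (P `&` P').
Proof.
elim: n P P' => [|n IH] P P' /=.
  case=> i -> [j ->] ne; apply: (proj1 (proj2 (proj2 pA))).
  by apply/eqP => e; apply: ne; rewrite e.
case=> i [B HB [BS ->]] [j [B' HB' [BS' ->]]] ne.
case: (eqVneq i j) => [eij|ij]; last first.
  apply: sub_finite_set ((proj1 (proj2 (proj2 pA))) i j ij).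
  by move=> x [[Ax _] [Ax' _]].
subst j.
have neB : B <> B' by move=> e; apply: ne; rewrite e.
apply: (@sub_finite_set _ _ (ginv i @` (B `&` B'))); last first.
  exact: finite_image (IH _ _ HB HB' neB).
by move=> x [[Ax Bx] [_ B'x]]; exists (f i x) => //; exact: ginvK.
Qed.

Lemma pieces_cover n x : exists P, pieces A f n P /\ P x.
Proof.
have [i [w [sw [ad Px]]]] := Pw_cover n x.
by exists (Pw i w); split => //; rewrite -sw; exact: Pw_piece.
Qed.

Lemma pieces_interior n P x : pieces A f n P -> P x ->
  (forall P', pieces A f n P' -> P' x -> P' = P) -> P° x.
Proof.
move=> HP Px Hx.
pose G := ~` \bigcup_(P' in [set P' | pieces A f n P' /\ P' <> P]) P'.
have oG : open G.
  apply: closed_openC; apply: closed_bigcup.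
    by apply: sub_finite_set (pieces_finite n) => P' [].
  by move=> P' [HP' _]; exact: pieces_closed HP'.
have Gx : G x by move=> [P' [HP' ne] P'x]; apply: ne; exact: Hx.
have GP : G `<=` P.
  move=> z Gz; have [P'' [HP'' P''z]] := pieces_cover n z.
  case: (pselect (P'' = P)) => [<- //|ne].
  by exfalso; apply: Gz; exists P''.
rewrite /interior; apply: filterS GP _; exact: open_nbhs_nbhs.
Qed.

Lemma shrink (tA : top_expanding A f) y (e : R) : (0 < e)%R ->
  exists n, forall P, pieces A f n P -> P y -> P `<=` ball y e.
Proof.
move=> e0; move: (tA y) => /= [_ basis].
have e20 : (0 < e / 2)%R by rewrite divr_gt0.
have [n Hn] := basis _ (@nbhsx_ballx _ _ y _ e20).
exists n => P HP Py z Pz; apply: contrapT => nz.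
case: (pieces_class _ _ HP) => [[i [w [sw [ad eP]]]] | Ps]; last first.
  by apply: nz; rewrite (Ps _ _ Pz Py); exact: ballxx.
pose F := P `&` \bigcup_(P' in [set P' | pieces A f n P' /\ P' <> P]) P'.
have fF : finite_set F.
  rewrite /F setI_bigcupr; apply: bigcup_finite.
    by apply: sub_finite_set (pieces_finite n) => P' [].
  by move=> P' [HP' ne]; apply: (pieces_finI _ _ _ HP HP') => e'; apply: ne; rewrite e'.
pose O := ~` closed_ball y (e / 2).
apply: (@conn_open_fin P O F z y).
- by rewrite eP; exact: Pw_conn.
- by rewrite /O; apply: closed_openC; exact: closed_ball_closed.
- exact: fF.
- move=> z' [Pz' Oz']; apply: contrapT => nF; apply: Oz'.
  apply: subset_closed_ball; apply: Hn.
  apply: (@interiorS _ P); first by move=> u Pu; exists P.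
  apply: (@pieces_interior n P z' HP Pz') => P' HP' P'z'; apply: contrapT => ne.
  by apply: nF; split => //; exists P'.
- exact: Pz.
- by move=> /subset_closure_half => /(_ e0).
- exact: Py.
- by apply; apply: subset_closed_ball; exact: ballxx.
Qed.

Lemma ball_eq (y y' : X) : (forall e : R, (0 < e)%R -> ball y e y') -> y = y'.
Proof.
move=> H; apply: hX => U V /nbhs_ballP [e e0 sU] /nbhs_ballP [e' e'0 sV].
exists y'; split; last by apply: sV; exact: ballxx.
apply: sU; apply: H; exact: e0.
Qed.

Lemma uniq_pt (tA : top_expanding A f) y y' :
  (forall n, exists P, pieces A f n P /\ P y /\ P y') -> y = y'.
Proof.
move=> H; apply: ball_eq => e e0.
have [n Hn] := shrink tA y e e0; have [P [HP [Py Py']]] := H n.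
exact: Hn HP Py _ Py'.
Qed.

Lemma nested_inter (C : nat -> set X) : (forall n, closed (C n)) ->
  (forall n, C n.+1 `<=` C n) -> (forall n, C n !=set0) ->
  exists y, forall n, C n y.
Proof.
move=> clC decC neC.
have mono : forall n k, (n <= k)%N -> C k `<=` C n.
  move=> n k /subnK <-; elim: (k - n)%N => [|d IH] //=.
  by rewrite addSn; exact: subset_trans (decC _) IH.
pose F := filter_from [set: nat] C.
have FF : ProperFilter F.
  apply: filter_from_proper; last by move=> i _; exact: neC.
  apply: filter_from_filter; first by exists 0%N.
  move=> i j _ _; exists (maxn i j) => //.
  by move=> z Cz; split; apply: (mono _ (maxn i j)) => //; rewrite ?leq_maxl ?leq_maxr.
have [y [_ cly]] := cX _ FF (ex_intro2 _ _ 0%N I (fun _ _ => I)).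
exists y => n; apply: (clC n) => B nB.
by apply: cly => //; exists n.
Qed.

Lemma selfconj_id (tA : top_expanding A f) (Phi : X -> X) :
  (forall i x, A i x -> A i (Phi x)) ->
  (forall i x, A i x -> Phi (f i x) = f i (Phi x)) -> forall x, Phi x = x.
Proof.
move=> h1 h2 x.
have key : forall w i z, Pw i w z -> Pw i w (Phi z).
  elim=> [|j w IH] i z /=; first exact: h1.
  move=> [Az Pfz]; split; first exact: h1.
  by rewrite /preimage -h2 //; exact: IH.
symmetry; apply: uniq_pt => // n.
have [i [w [sw [ad Px]]]] := Pw_cover n x.
exists (Pw i w); split; first by rewrite -sw; exact: Pw_piece.
by split => //; exact: key.
Qed.

End Sys.
Section Conj.
Variables (R : realType) (X : pseudoMetricType R) (m : nat).
Variables (A B : 'I_m -> set X) (f g : 'I_m -> X -> X) (Hc : X -> X).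
Hypothesis hX : hausdorff_space X.
Hypothesis cX : compact [set: X].
Hypothesis pA : is_partition A.
Hypothesis pB : is_partition B.
Hypothesis mA : is_markov A f.
Hypothesis mB : is_markov B g.
Hypothesis tA : top_expanding A f.
Hypothesis tB : top_expanding B g.
Hypothesis h1 : forall i, Hc @` A i = B i.
Hypothesis h2 : forall i x, A i x -> bk A x -> Hc (f i x) = g i (Hc x).
Hypothesis h3 : forall i j, (A j `<=` f i @` A i) <-> (B j `<=` g i @` B i).

Local Notation PA := (Pw R X m A f).
Local Notation PB := (Pw R X m B g).
Local Notation admA := (adm R X m A f).
Local Notation admB := (adm R X m B g).
Local Notation gi := (ginv R X m B g mB).

Lemma adm_AB {i w} : admA i w -> admB i w.
Proof. by elim: w i => [|j w IH] i //= [Hj ad]; split; [exact/h3 | exact: IH]. Qed.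

Lemma HcB i x : A i x -> B i (Hc x).
Proof. by move=> Ax; rewrite -h1; exists x. Qed.

Lemma Hc_bk w i x : bk A x -> PA i w x -> PB i w (Hc x).
Proof.
elim: w i x => [|j w IH] i x /=; first by move=> _; exact: HcB.
move=> bx [Ax Pfx]; split; first exact: HcB.
have bfx : bk A (f i x) by exact: ((proj2 (proj2 mA)) i (f i x) (ex_intro2 _ _ x (conj Ax bx) erefl)).
by rewrite /preimage -h2 //; exact: IH.
Qed.

Definition good x y := forall i w, admA i w -> PA i w x -> PB i w y.

Lemma idx_ex x : exists i, A i x.
Proof.
have : [set: X] x by [].
by rewrite -(proj2 (proj2 (proj2 pA))) => -[i _ Ax]; exists i.
Qed.

Definition idx x := sval (cid (idx_ex x)).
Lemma idxP x : A (idx x) x. Proof. by rewrite /idx; case: cid. Qed.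

Lemma nbk_uniq {x i j} : ~ bk A x -> A i x -> A j x -> i = j.
Proof.
move=> nb Ai Aj; apply/eqP; apply: contrapT => /negP nij.
by apply: nb; exists i, j.
Qed.

Fixpoint K (n : nat) (x : X) : X :=
  if n is n'.+1 then
    if pselect (bk A x) then Hc x else gi (idx x) (K n' (f (idx x) x))
  else Hc x.

Lemma K_good n x i w : size w = n -> admA i w -> PA i w x -> PB i w (K n x).
Proof.
elim: n x i w => [|n IH] x i [|j w] //=.
- by move=> _ _ Ax; exact: HcB.
- move=> [sw] [Hj ad] [Ax Pfx].
  case: pselect => [bx|nbx]; first by apply: (Hc_bk (j :: w)) => //.
  have ei : idx x = i by apply: (nbk_uniq nbx) => //; exact: idxP.
  rewrite ei.
  have sub : PB j w `<=` g i @` B i.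
    by apply: subset_trans (@Pw_sub R X m B g j w) _; exact/h3.
  have := @preim_img R X m B g mB i (PB j w) sub.
  move=> e; have : (B i `&` g i @^-1` PB j w) (gi i (K n (f i x))).
    by rewrite e; exists (K n (f i x)) => //; exact: IH.
  by [].
Qed.

Lemma good_ex x : exists y, good x y.
Proof.
pose C n := \bigcap_(p in [set p : 'I_m * seq 'I_m |
   size p.2 = n /\ admA p.1 p.2 /\ PA p.1 p.2 x]) PB p.1 p.2.
have [y Hy] : exists y, forall n, C n y.
  apply: (@nested_inter R X cX).
  - move=> n; apply: closed_bigI => -[i w] /= [sw [ad _]].
    apply: (@pieces_closed R X m B g hX cX pB mB (size w)).
    exact: (Pw_piece _ _ _ _ _ _ _ (adm_AB ad)).
  - move=> n y Cy [i w] /= [sw [ad Px]].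
    have [a [ad' Px']] := @Pw_ext R X m A f mA i w x ad Px.
    apply: (@Pw_trunc R X m B g i w a).
    by apply: (Cy (i, rcons w a)); rewrite /= size_rcons sw.
  - by move=> n; exists (K n x) => -[i w] /= [sw [ad Px]]; exact: K_good.
by exists y => i w ad Px; exact: (Hy (size w) (i, w)).
Qed.

Lemma good_uniq x y y' : good x y -> good x y' -> y = y'.
Proof.
move=> gy gy'; apply: (@uniq_pt R X m B g hX cX pB mB tB) => n.
have [i [w [sw [ad Px]]]] := @Pw_cover R X m A f pA mA n x.
exists (PB i w); split; first by rewrite -sw; exact: (Pw_piece _ _ _ _ _ _ _ (adm_AB ad)).
by split; [exact: gy | exact: gy'].
Qed.

Definition H x := sval (cid (good_ex x)).
Lemma H_good x : good x (H x). Proof. by rewrite /H; case: cid. Qed.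
Lemma H_eq x y : good x y -> H x = y.
Proof. by move=> gy; apply: good_uniq gy; exact: H_good. Qed.

Lemma H_bk x : bk A x -> H x = Hc x.
Proof. by move=> bx; apply: H_eq => i w _; exact: Hc_bk. Qed.

Lemma H_sub i x : A i x -> B i (H x).
Proof. by move=> Ax; exact: (H_good x i [::] I Ax). Qed.

Lemma H_conj i x : A i x -> H (f i x) = g i (H x).
Proof.
move=> Ax; case: (pselect (bk A x)) => [bx|nbx].
  have bfx : bk A (f i x) by exact: ((proj2 (proj2 mA)) i (f i x) (ex_intro2 _ _ x (conj Ax bx) erefl)).
  by rewrite !H_bk // h2.
set z := H (f i x).
have zimg : (g i @` B i) z.
  have [k [Hk Akf]] := @fimg_cover R X m A f mA i (f i x) (ex_intro2 _ _ x Ax erefl).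
  exact: ((proj1 (h3 i k)) Hk z (H_sub k (f i x) Akf)).
have [b Bb gbz] := zimg.
have eH : H x = gi i z.
  apply: H_eq => j [|k w] ad Px.
    by rewrite -(nbk_uniq nbx Ax Px) -gbz (@ginvK R X m B g mB).
  have ej : j = i by apply: (nbk_uniq nbx) => //; exact: (@Pw_sub R X m A f j (k :: w)).
  subst j; move: Px ad => /= [_ Pfx] [Hk ad].
  have sub : PB k w `<=` g i @` B i.
    by apply: subset_trans (@Pw_sub R X m B g k w) _; exact/h3.
  rewrite /= -gbz (@ginvK R X m B g mB i b Bb); split => //; rewrite gbz.
  exact: (H_good (f i x) k w ad Pfx).
by rewrite eH -gbz (@ginvK R X m B g mB).
Qed.

Lemma H_cont : continuous H.
Proof.
move=> x V /nbhs_ballP [e e0 sV].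
have [n Hn] := @shrink R X m B g hX cX pB mB tB (H x) e e0.
move: (tA x) => /= [Un _].
apply: filterS (Un n) => x' Ux'; apply: sV.
have [P [HP Px] Px'] := interior_subset Ux'.
case: (@pieces_class R X m A f hX pA mA n P HP) => [[i [w [sw [ad eP]]]] | Ps].
  apply: (Hn (PB i w)); first by rewrite -sw; exact: (Pw_piece _ _ _ _ _ _ _ (adm_AB ad)).
    by apply: H_good => //; rewrite -eP.
  by apply: H_good => //; rewrite -eP.
by rewrite (Ps _ _ Px' Px); exact: ballxx.
Qed.

End Conj.
Theorem proposition2p6 (R : realType) (X : pseudoMetricType R) (m : nat)
  (A B : 'I_m -> set X) (f g : 'I_m -> X -> X) :
  hausdorff_space X -> compact [set: X] ->
  is_partition A -> is_partition B ->
  is_markov A f -> is_markov B g ->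
  top_expanding A f -> top_expanding B g ->
  comb_conjugate A B f g ->
  exists H : X -> X, homeomorphism H /\
    (forall i x, A i x -> H (f i x) = g i (H x)).
Proof.
move=> hX cX pA pB mA mB tA tB [Hc [[cH [Kc [cK [HK KH]]]] [h1 [h2 h3]]]].
have h1' : forall i, Kc @` B i = A i.
  move=> i; rewrite -h1; apply/seteqP; split.
    by move=> _ [_ [x Ax <-] <-]; rewrite HK.
  by move=> x Ax; exists (Hc x); [exists x | rewrite HK].
have h2' : forall i y, B i y -> bk B y -> Kc (g i (y)) = f i (Kc y).
  move=> i y By [i1 [j1 [ij [B1 B2]]]].
  have Ax : A i (Kc y) by rewrite -h1'; exists y.
  have bx : bk A (Kc y).
    exists i1, j1; split => //; split; rewrite -h1'; by exists y.
  by rewrite -[in LHS](KH y) -h2 // HK.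
have h3' : forall i j, (B j `<=` g i @` B i) <-> (A j `<=` f i @` A i).
  by move=> i j; split => /h3.
pose H1 := H R X m A B f g Hc hX cX pA pB mA mB h1 h2 h3.
pose H2 := H R X m B A g f Kc hX cX pB pA mB mA h1' h2' h3'.
have c1 := H_conj R X m A B f g Hc hX cX pA pB mA mB tB h1 h2 h3.
have c2 := H_conj R X m B A g f Kc hX cX pB pA mB mA tA h1' h2' h3'.
have s1 := H_sub R X m A B f g Hc hX cX pA pB mA mB h1 h2 h3.
have s2 := H_sub R X m B A g f Kc hX cX pB pA mB mA h1' h2' h3'.
exists H1; split; last exact: c1.
split; first exact: H_cont.
exists H2; split; first exact: H_cont.
split.
  apply: (selfconj_id R X m A f hX cX pA mA tA).
    by move=> i x Ax; apply: s2; exact: s1.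
  by move=> i x Ax; rewrite /H1 /H2 /= c1 // c2 //; exact: s1.
apply: (selfconj_id R X m B g hX cX pB mB tB).
  by move=> i x Bx; apply: s1; exact: s2.
by move=> i x Bx; rewrite /H1 /H2 /= c2 // c1 //; exact: s2.
Qed.
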